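(* Let $d\geqslant 2$. Every $(d-1)$-neighborly family $F\subseteq S^d$ of maximum possible size is a partition, i.e., $\sum_{x\in F}2^{j(x)}=2^d$, where $j(x)$ is the number of jokers in $x$.
   Context: Let $S=\{0,1,\ast\}$ and let $S^d$ be the set of strings of length $d$ over $S$; the symbol $\ast$ is called a joker, and $j(x)$ denotes the number of jokers in $x\in S^d$. For $x,y\in S^d$, $d(x,y)$ is the number of positions $i\in[d]$ such that one of $x_i,y_i$ equals $0$ and the other equals $1$. A family $F\subseteq S^d$ is $k$-neighborly if $1\leqslant d(x,y)\leqslant k$ for all distinct $x,y\in F$. A $k$-neighborly family $F$ is called a partition if $\sum_{x\in F}2^{j(x)}=2^d$. ''Maximum possible size'' means that no $(d-1)$-neighborly family in $S^d$ has more elements. *)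

(* Defs.v *)
From HB Require Import structures.
From mathcomp Require Import all_boot.
Set Implicit Arguments. Unset Strict Implicit. Unset Printing Implicit Defensive.

Inductive sym := S0 | S1 | Joker.

Definition sym_code (s : sym) : 'I_3 :=
  match s with S0 => inord 0 | S1 => inord 1 | Joker => inord 2 end.
Definition sym_decode (i : 'I_3) : sym :=
  match val i with 0 => S0 | 1 => S1 | _ => Joker end.
Lemma sym_codeK : cancel sym_code sym_decode.
Proof. by case; rewrite /sym_decode /= inordK. Qed.
HB.instance Definition _ := Finite.copy sym (can_type sym_codeK).

Definition word (d : nat) := {ffun 'I_d -> sym}.

Definition jokers d (x : word d) : nat := #|[set i | x i == Joker]|.

Definition opp (a b : sym) : bool :=
  ((a == S0) && (b == S1)) || ((a == S1) && (b == S0)).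

Definition dist d (x y : word d) : nat := #|[set i | opp (x i) (y i)]|.

Definition neighborly d (k : nat) (F : {set word d}) : Prop :=
  forall x y, x \in F -> y \in F -> x != y -> 1 <= dist x y <= k.

Definition is_partition d (F : {set word d}) : Prop :=
  \sum_(x in F) 2 ^ jokers x = 2 ^ d.

(* Main.v *)
Require Import Defs.
From mathcomp Require Import all_boot zify.
Set Warnings "-notation-overridden,-redundant-canonical-projection".
Set Implicit Arguments. Unset Strict Implicit.

Definition allowed (s : sym) : pred bool := fun b =>
  match s with Joker => true | S0 => ~~ b | S1 => b end.
Notation pts d := {ffun 'I_d -> bool}.
Definition cover d (x : word d) : {set pts d} :=
  [set p : pts d | [forall i, allowed (x i) (p i)]].

Lemma card_allowed s : #|allowed s| = if s is Joker then 2 else 1.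
Proof.
case: s => /=.
- by rewrite (@eq_card _ _ (pred1 false)) ?card1 // => b; case: b.
- by rewrite (@eq_card _ _ (pred1 true)) ?card1 // => b; case: b.
- by rewrite (@eq_card _ _ predT) ?card_bool.
Qed.

Lemma card_cover d (x : word d) : #|cover x| = 2 ^ jokers x.
Proof.
have -> : #|cover x| = #|(family (fun i => allowed (x i)) : simpl_pred {ffun 'I_d -> bool})|.
  apply: eq_card => p; rewrite inE; apply/forallP/familyP => H i; exact: H.
rewrite card_family /image_mem foldrE big_map big_enum /=.
rewrite /jokers -prod_nat_const (bigID (fun i => x i == Joker)) /=.
rewrite [X in _ * X]big1 ?muln1; last by move=> i; rewrite card_allowed; case: (x i) => //; rewrite eqxx.
rewrite [LHS](eq_bigl (fun i => i \in [set i | x i == Joker])); last by move=> i; rewrite inE.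
by apply: eq_bigr => i; rewrite inE card_allowed => /eqP ->.
Qed.

Lemma eq_symE (a b : sym) : (a == b) = match a, b with S0,S0|S1,S1|Joker,Joker => true | _,_ => false end.
Proof. by case: a; case: b => /=; first [rewrite eqxx | apply/negbTE/eqP]. Qed.

Lemma oppE a b : opp a b = match a, b with S0,S1|S1,S0 => true | _,_ => false end.
Proof. by rewrite /opp !eq_symE; case: a; case: b. Qed.

Lemma cover_common d (x y : word d) p :
  p \in cover x -> p \in cover y -> dist x y = 0.
Proof.
rewrite !inE => /forallP Hx /forallP Hy.
apply/eqP; rewrite cards_eq0; apply/eqP/setP => i; rewrite !inE oppE.
move: (Hx i) (Hy i); case: (x i); case: (y i); case: (p i) => //.
Qed.

Lemma sum_le d (F : {set word d}) :
  (forall x y, x \in F -> y \in F -> x != y -> 1 <= dist x y) ->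
  \sum_(x in F) 2 ^ jokers x <= 2 ^ d.
Proof.
move=> HF.
have E : forall x : word d, 2 ^ jokers x = \sum_(p : pts d) (p \in cover x).
  move=> x; rewrite -card_cover -sum1_card big_mkcond /=.
  by apply: eq_bigr => p _; case: (p \in cover x).
under eq_bigr => x _ do rewrite E.
rewrite exchange_big /=.
have -> : 2 ^ d = \sum_(p : pts d) 1.
  by rewrite sum1_card card_ffun card_bool card_ord.
apply: leq_sum => p _.
case: (boolP [exists x in F, p \in cover x]) => [/existsP [x0 /andP [Hx0 Hp0]] | /existsPn Hn].
  rewrite (bigD1 x0) //= Hp0 big1 // => y /andP [Hy Hyx].
  case: (boolP (p \in cover y)) => // Hpy.
  have := HF y x0 Hy Hx0 Hyx; by rewrite (cover_common Hpy Hp0).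
rewrite big1 // => x Hx.
by move: (Hn x); rewrite Hx /= => /negbTE ->.
Qed.

Lemma coverP d (x : word d) p : p \in cover x -> forall i, allowed (x i) (p i).
Proof. by rewrite inE => /forallP. Qed.

Lemma dist_ge1 d (x y : word d) i : opp (x i) (y i) -> 1 <= dist x y.
Proof. by move=> H; rewrite card_gt0; apply/set0Pn; exists i; rewrite inE. Qed.

Lemma dist_le d (x y : word d) i : ~~ opp (x i) (y i) -> dist x y <= d - 1.
Proof.
move=> H; apply: (@leq_trans #|[set~ i]|); last by rewrite cardsC1 card_ord subn1.
apply: subset_leq_card; apply/subsetP => k; rewrite !inE.
by apply: contraTneq => ->.
Qed.

Lemma ffun_neq d (p q : pts d) : p != q -> exists i, p i != q i.
Proof.
move=> H; apply/existsP; apply: contraNT H => /existsPn H.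
by apply/eqP/ffunP => i; move: (H i); rewrite negbK => /eqP.
Qed.

Lemma jokers0 d (x : word d) : jokers x = 0 -> forall i, x i != Joker.
Proof.
move=> /eqP; rewrite cards_eq0 => /eqP H i; apply/negP => Hi.
by have := in_set0 i; rewrite -H inE Hi.
Qed.

Lemma points_bound d (F : {set word d}) : 0 < d -> neighborly (d - 1) F ->
  2 * #|[set x in F | jokers x == 0]| <= 2 ^ d.
Proof.
move=> hd HF; set P := [set x in F | jokers x == 0].
pose unpt (x : word d) : pts d := [ffun i => x i == S1].
pose neg (p : pts d) : pts d := [ffun i => ~~ p i].
have HPj : forall x, x \in P -> forall i, x i != Joker.
  by move=> x; rewrite inE => /andP [_ /eqP]; apply: jokers0.
have Hinj : {in P &, injective unpt}.
  move=> x y Hx Hy E; apply/ffunP => i.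
  have := congr1 (fun f : pts d => f i) E; rewrite !ffunE.
  move: (HPj x Hx i) (HPj y Hy i); rewrite !eq_symE.
  by case: (x i); case: (y i).
have Hneg : injective neg.
  by move=> p q E; apply/ffunP => i; have := congr1 (fun f : pts d => f i) E; rewrite !ffunE => /negb_inj.
have Hdisj : unpt @: P :&: neg @: (unpt @: P) = set0.
  apply/setP => p; rewrite !inE; apply/negP => /andP [/imsetP [x Hx ->] /imsetP [q /imsetP [y Hy ->] E]].
  have Hopp : forall i, opp (x i) (y i).
    move=> i; have := congr1 (fun f : pts d => f i) E; rewrite !ffunE.
    move: (HPj x Hx i) (HPj y Hy i); rewrite oppE !eq_symE.
    by case: (x i); case: (y i).
  have Hd : dist x y = d.
    rewrite /dist (_ : [set i | opp (x i) (y i)] = setT) ?cardsT ?card_ord //.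
    by apply/setP => i; rewrite !inE Hopp.
  have i0 : 'I_d by exists 0.
  case: (eqVneq x y) => [Exy | Nxy].
    by move: (Hopp i0); rewrite Exy oppE; case: (y i0).
  have HPF : forall z, z \in P -> z \in F by move=> z; rewrite inE => /andP [].
  have := HF x y (HPF x Hx) (HPF y Hy) Nxy; rewrite Hd => /andP [_].
  move=> H; lia.
have := max_card (unpt @: P :|: neg @: (unpt @: P)).
rewrite cardsU Hdisj cards0 subn0 card_imset // card_in_imset //.
by rewrite card_ffun card_bool card_ord mul2n -addnn.
Qed.

Lemma construction n : exists G : {set word n.+2},
  neighborly (n.+2 - 1) G /\ #|G| = 3 * 2 ^ n.
Proof.
pose i0 : 'I_n.+2 := ord0.
pose i1 : 'I_n.+2 := inord 1.
have Hi01 : i1 != i0 by rewrite -val_eqE /= inordK.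
pose a : word n.+2 := [ffun i => if i == i0 then S0 else Joker].
pose b : word n.+2 := [ffun i => if i == i0 then S1 else if i == i1 then S0 else Joker].
pose pt (p : pts n.+2) : word n.+2 := [ffun i => if p i then S1 else S0].
pose mk (p : pts n.+2) : word n.+2 := [ffun i => if i == i1 then Joker else if p i then S1 else S0].
have Ha : forall p, p \in cover a -> p i0 = false.
  by move=> p /coverP /(_ i0); rewrite ffunE eqxx /=; case: (p i0).
have Hb0 : forall p, p \in cover b -> p i0 = true.
  by move=> p /coverP /(_ i0); rewrite ffunE eqxx /=.
have Hb1 : forall p, p \in cover b -> p i1 = false.
  by move=> p /coverP /(_ i1); rewrite ffunE (negbTE Hi01) eqxx /=; case: (p i1).
have ptinj : injective pt.
  move=> p q E; apply/ffunP => i; have := congr1 (fun f : word n.+2 => f i) E.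
  by rewrite !ffunE; case: (p i); case: (q i) => //; rewrite eq_symE.
have mkinj : {in cover b &, injective mk}.
  move=> p q Hp Hq E; apply/ffunP => i; case: (eqVneq i i1) => [->|Ni]; first by rewrite (Hb1 p Hp) (Hb1 q Hq).
  have := congr1 (fun f : word n.+2 => f i) E.
  by rewrite !ffunE (negbTE Ni); case: (p i); case: (q i) => //; rewrite eq_symE.
have ja : jokers a = n.+1.
  rewrite /jokers (_ : [set i | a i == Joker] = [set~ i0]) ?cardsC1 ?card_ord //.
  apply/setP => i; rewrite !inE ffunE; by case: (i == i0); rewrite eq_symE.
have jb : jokers b = n.
  rewrite /jokers (_ : [set i | b i == Joker] = [set~ i0] :\ i1).
    by have := cardsD1 i1 [set~ i0]; rewrite !inE Hi01 cardsC1 card_ord /= => ?; lia.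
  apply/setP => i; rewrite !inE ffunE; by case: (i == i0); case: (i == i1); rewrite eq_symE.
exists (pt @: cover a :|: mk @: cover b); split.
  move=> x y Hx Hy Nxy.
  have Hptmk : forall p q, p \in cover a -> q \in cover b ->
      1 <= dist (pt p) (mk q) <= n.+2 - 1 /\ 1 <= dist (mk q) (pt p) <= n.+2 - 1.
    move=> p q Hp Hq.
    have Hge : opp (pt p i0) (mk q i0) by rewrite !ffunE eq_sym (negbTE Hi01) Ha ?Hb0 // oppE.
    have Hle : ~~ opp (pt p i1) (mk q i1) by rewrite !ffunE eqxx oppE; case: (p i1).
    rewrite (dist_ge1 Hge) (dist_le Hle) (@dist_ge1 _ _ _ i0) ?(@dist_le _ _ _ i1) //.
      by move: Hle; rewrite !oppE; case: (pt p i1); case: (mk q i1).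
    by move: Hge; rewrite !oppE; case: (pt p i0); case: (mk q i0).
  move: Nxy; case/setUP: Hx => /imsetP [p Hp ->]; case/setUP: Hy => /imsetP [q Hq ->] Nxy.
  - have [i Hi] : exists i, p i != q i by apply: ffun_neq; apply/negP => /eqP E; subst q; by rewrite eqxx in Nxy.
    rewrite (@dist_ge1 _ _ _ i) ?(@dist_le _ _ _ i0) //.
      by rewrite !ffunE Ha ?Ha // oppE.
    by move: Hi; rewrite !ffunE oppE; case: (p i); case: (q i).
  - by case: (Hptmk p q Hp Hq).
  - by case: (Hptmk q p Hq Hp).
  - have [i Hi] : exists i, p i != q i by apply: ffun_neq; apply/negP => /eqP E; subst q; by move/eqP: Nxy.
    have Ni : i != i1 by apply: contraNneq Hi => ->; rewrite !Hb1.
    rewrite (@dist_ge1 _ _ _ i) ?(@dist_le _ _ _ i1) //.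
      by rewrite !ffunE eqxx oppE.
    by move: Hi; rewrite !ffunE (negbTE Ni) oppE; case: (p i); case: (q i).
rewrite cardsU.
have -> : pt @: cover a :&: mk @: cover b = set0.
  apply/setP => x; rewrite !inE; apply/negP => /andP [/imsetP [p _ ->] /imsetP [q _ E]].
  have := congr1 (fun f : word n.+2 => f i1) E; rewrite !ffunE eqxx.
  by case: (p i1).
rewrite cards0 subn0 card_imset // card_in_imset // !card_cover ja jb expnS.
lia.
Qed.

Theorem proposition3 (d : nat) (F : {set word d}) :
  2 <= d ->
  neighborly (d - 1) F ->
  (forall G : {set word d}, neighborly (d - 1) G -> #|G| <= #|F|) ->
  is_partition F.
Proof.
move=> hd HF Hmax.
have HF1 : forall x y, x \in F -> y \in F -> x != y -> 1 <= dist x y.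
  by move=> x y Hx Hy Nxy; case/andP: (HF x y Hx Hy Nxy).
have Hs := sum_le HF1.
have Hp := points_bound (ltnW hd) HF.
have Hcount : 2 * #|F| <= \sum_(x in F) 2 ^ jokers x + #|[set x in F | jokers x == 0]|.
  have -> : #|[set x in F | jokers x == 0]| = \sum_(x in F) (jokers x == 0 : nat).
    rewrite -sum1_card [LHS]big_mkcond [RHS]big_mkcond /=.
    by apply: eq_bigr => x _; rewrite inE; case: (x \in F); case: (jokers x == 0).
  rewrite -big_split /= mul2n -addnn -sum1_card -big_split /=.
  apply: leq_sum => x _; case: (jokers x) => [|j] //=.
  by rewrite expnS addn0 add1n; have := expn_gt0 2 j; lia.
rewrite /is_partition; apply/eqP; rewrite eqn_leq Hs /= leqNgt; apply/negP => Hlt.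
case: d hd F HF Hmax HF1 Hs Hp Hcount Hlt => [|[|n]] // _ F HF Hmax HF1 Hs Hp Hcount Hlt.
have [G [HG cardG]] := construction n.
have := Hmax G HG; rewrite cardG.
move: Hp Hcount Hlt; rewrite !expnS.
set N := 2 ^ n; set S := \sum_(x in F) _; set P := #|_|.
lia.
Qed.
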